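(* Let $\Sigma=\{(x,y)\in\mathbb{R}^2_+ : x+y=1\}$. Let $S\subset\mathbb{R}^2_+\setminus\{(0,0)\}$ be a connected set such that, for some $R>0$, $S\cap\{(0,y) : y\in(0,R)\}\neq\emptyset$ and $S\cap\{(x,0) : x\in(0,R)\}\neq\emptyset$. Let $\pi:S\to\Sigma$ be the projection along positive rays, $\pi(x,y)=\big(\tfrac{x}{x+y},\tfrac{y}{x+y}\big)$, and let $G:S\to\Sigma$ be continuous. Then the multivalued map $H=\pi^{-1}\circ G:S\multimap S$ (where $\pi^{-1}(z)=\{s\in S:\pi(s)=z\}$) has at least one fixed point, i.e. there exists $s\in S$ with $s\in\pi^{-1}(G(s))$, equivalently $\pi(s)=G(s)$.
   Context: $\mathbb{R}^2_+$ denotes the closed positive quadrant $\{(x,y):x\ge0,\,y\ge0\}$. *)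

(* Defs.v *)
From Stdlib Require Import Reals.
Open Scope R_scope.

Definition pt := (R * R)%type.

Definition dist2 (p q : pt) : R :=
  sqrt ((fst p - fst q)^2 + (snd p - snd q)^2).

Definition open2 (U : pt -> Prop) : Prop :=
  forall p, U p -> exists eps, 0 < eps /\ forall q, dist2 p q < eps -> U q.

Definition connected2 (S : pt -> Prop) : Prop :=
  ~ (exists U V : pt -> Prop,
        open2 U /\ open2 V /\
        (forall p, S p -> U p \/ V p) /\
        (exists p, S p /\ U p) /\
        (exists p, S p /\ V p) /\
        (forall p, S p -> U p -> V p -> False)).

Definition quadrant (p : pt) : Prop := 0 <= fst p /\ 0 <= snd p.

Definition Sigma (p : pt) : Prop := quadrant p /\ fst p + snd p = 1.

Definition proj_ray (p : pt) : pt :=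
  (fst p / (fst p + snd p), snd p / (fst p + snd p)).

Definition proj_inv (S : pt -> Prop) (z : pt) : pt -> Prop :=
  fun s => S s /\ proj_ray s = z.

Definition continuous_on2 (S : pt -> Prop) (G : pt -> pt) : Prop :=
  forall s, S s -> forall eps, 0 < eps ->
    exists delta, 0 < delta /\
      forall t, S t -> dist2 s t < delta -> dist2 (G s) (G t) < eps.

(* Main.v *)
Require Import Defs.
From Stdlib Require Import Reals.
From Stdlib Require Import Lra Psatz Classical.
Open Scope R_scope.

Lemma dist_fst (p q : pt) : Rabs (fst p - fst q) <= dist2 p q.
Proof.
  unfold dist2. rewrite <- sqrt_Rsqr_abs. apply sqrt_le_1_alt.
  unfold Rsqr. simpl. pose proof (Rle_0_sqr (snd p - snd q)). unfold Rsqr in *. lra.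
Qed.

Lemma dist_snd (p q : pt) : Rabs (snd p - snd q) <= dist2 p q.
Proof.
  unfold dist2. rewrite <- sqrt_Rsqr_abs. apply sqrt_le_1_alt.
  unfold Rsqr. simpl. pose proof (Rle_0_sqr (fst p - fst q)). unfold Rsqr in *. lra.
Qed.

Lemma dist_le (p q : pt) : dist2 p q <= Rabs (fst p - fst q) + Rabs (snd p - snd q).
Proof.
  unfold dist2.
  set (a := fst p - fst q). set (b := snd p - snd q).
  assert (H : 0 <= Rabs a + Rabs b) by (pose proof (Rabs_pos a); pose proof (Rabs_pos b); lra).
  rewrite <- (sqrt_Rsqr (Rabs a + Rabs b)) by exact H.
  apply sqrt_le_1_alt. unfold Rsqr. simpl.
  pose proof (Rabs_pos a); pose proof (Rabs_pos b).
  assert (Rabs a * Rabs a = a * a) by (rewrite <- Rabs_mult; apply Rabs_pos_eq; apply Rle_0_sqr).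
  assert (Rabs b * Rabs b = b * b) by (rewrite <- Rabs_mult; apply Rabs_pos_eq; apply Rle_0_sqr).
  pose proof (Rmult_le_pos _ _ H0 H1). lra.
Qed.

Section Main.
Variables (S : pt -> Prop) (G : pt -> pt).
Hypothesis HSsub : forall p, S p -> quadrant p /\ p <> (0, 0).
Hypothesis HGmap : forall s, S s -> Sigma (G s).
Hypothesis HGcont : continuous_on2 S G.

Definition g (t : pt) : R := fst t * snd (G t) - snd t * fst (G t).

Lemma gcont s : S s -> g s <> 0 -> exists d, 0 < d /\
  forall t, S t -> Rabs (fst s - fst t) < d -> Rabs (snd s - snd t) < d ->
    Rabs (g t - g s) < Rabs (g s).
Proof.
  intros Ss Hg.
  set (m := Rabs (g s)).
  assert (Hm : 0 < m) by (apply Rabs_pos_lt; exact Hg).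
  set (X := Rabs (fst s) + Rabs (snd s)).
  assert (HX : 0 <= X) by (pose proof (Rabs_pos (fst s)); pose proof (Rabs_pos (snd s)); unfold X; lra).
  set (e := m / (2 * (X + 1))).
  assert (He : 0 < e) by (unfold e; apply Rdiv_lt_0_compat; lra).
  assert (HeX : e * (2 * (X + 1)) = m) by (unfold e; field; lra).
  destruct (HGcont s Ss e He) as [dl [Hdl Hc]].
  exists (Rmin (dl / 2) (m / 4)). split.
  { apply Rmin_pos; lra. }
  intros t St H1 H2.
  pose proof (Rmin_l (dl/2) (m/4)). pose proof (Rmin_r (dl/2) (m/4)).
  assert (Hd : dist2 s t < dl).
  { pose proof (dist_le s t). lra. }
  specialize (Hc t St Hd).
  pose proof (dist_fst (G s) (G t)) as Ha.
  pose proof (dist_snd (G s) (G t)) as Hb.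
  destruct (HGmap t St) as [[Ha0 Hb0] Hab].
  unfold g.
  set (xs := fst s) in *. set (ys := snd s) in *.
  set (xt := fst t) in *. set (yt := snd t) in *.
  set (as_ := fst (G s)) in *. set (bs := snd (G s)) in *.
  set (at_ := fst (G t)) in *. set (bt := snd (G t)) in *.
  replace (xt * bt - yt * at_ - (xs * bs - ys * as_)) with
    ((xt - xs) * bt + xs * (bt - bs) - ((yt - ys) * at_ + ys * (at_ - as_))) by ring.
  eapply Rle_lt_trans. apply Rabs_triang.
  rewrite Rabs_Ropp.
  pose proof (Rabs_triang ((xt - xs) * bt) (xs * (bt - bs))).
  pose proof (Rabs_triang ((yt - ys) * at_) (ys * (at_ - as_))).
  rewrite !Rabs_mult in *.
  rewrite (Rabs_pos_eq bt) in * by lra. rewrite (Rabs_pos_eq at_) in * by lra.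
  rewrite (Rabs_minus_sym xt xs) in *. rewrite (Rabs_minus_sym yt ys) in *.
  rewrite (Rabs_minus_sym bt bs) in *. rewrite (Rabs_minus_sym at_ as_) in *.
  pose proof (Rabs_pos (xs - xt)). pose proof (Rabs_pos (ys - yt)).
  pose proof (Rabs_pos xs). pose proof (Rabs_pos ys).
  assert (Rabs xs * Rabs (bs - bt) <= Rabs xs * e) by (apply Rmult_le_compat_l; lra).
  assert (Rabs ys * Rabs (as_ - at_) <= Rabs ys * e) by (apply Rmult_le_compat_l; lra).
  assert (Rabs (xs - xt) * bt <= Rabs (xs - xt)) by nra.
  assert (Rabs (ys - yt) * at_ <= Rabs (ys - yt)) by nra.
  unfold X in HeX. nra.
Qed.

Definition U (q : pt) : Prop := exists s d, S s /\ 0 < d /\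
  Rabs (fst s - fst q) < d /\ Rabs (snd s - snd q) < d /\
  forall t, S t -> Rabs (fst s - fst t) < d -> Rabs (snd s - snd t) < d -> g t < 0.
Definition V (q : pt) : Prop := exists s d, S s /\ 0 < d /\
  Rabs (fst s - fst q) < d /\ Rabs (snd s - snd q) < d /\
  forall t, S t -> Rabs (fst s - fst t) < d -> Rabs (snd s - snd t) < d -> 0 < g t.

Lemma box_open (s q : pt) d : Rabs (fst s - fst q) < d -> Rabs (snd s - snd q) < d ->
  exists eps, 0 < eps /\ forall r, dist2 q r < eps ->
    Rabs (fst s - fst r) < d /\ Rabs (snd s - snd r) < d.
Proof.
  intros H1 H2.
  exists (Rmin (d - Rabs (fst s - fst q)) (d - Rabs (snd s - snd q))).
  split. { apply Rmin_pos; lra. }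
  intros r Hr.
  pose proof (Rmin_l (d - Rabs (fst s - fst q)) (d - Rabs (snd s - snd q))).
  pose proof (Rmin_r (d - Rabs (fst s - fst q)) (d - Rabs (snd s - snd q))).
  pose proof (dist_fst q r). pose proof (dist_snd q r).
  pose proof (Rabs_triang (fst s - fst q) (fst q - fst r)).
  pose proof (Rabs_triang (snd s - snd q) (snd q - snd r)).
  replace (fst s - fst q + (fst q - fst r)) with (fst s - fst r) in * by ring.
  replace (snd s - snd q + (snd q - snd r)) with (snd s - snd r) in * by ring.
  split; lra.
Qed.

Lemma U_open : open2 U.
Proof.
  intros q [s [d [Ss [Hd [H1 [H2 H3]]]]]].
  destruct (box_open s q d H1 H2) as [eps [He Hr]].
  exists eps. split; [exact He|]. intros r Hqr.
  destruct (Hr r Hqr). exists s, d. repeat split; auto.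
Qed.

Lemma V_open : open2 V.
Proof.
  intros q [s [d [Ss [Hd [H1 [H2 H3]]]]]].
  destruct (box_open s q d H1 H2) as [eps [He Hr]].
  exists eps. split; [exact He|]. intros r Hqr.
  destruct (Hr r Hqr). exists s, d. repeat split; auto.
Qed.

Lemma inU p : S p -> g p < 0 -> U p.
Proof.
  intros Sp Hg. destruct (gcont p Sp ltac:(lra)) as [d [Hd Hc]].
  exists p, d. repeat split; auto.
  - rewrite Rminus_diag, Rabs_R0; lra.
  - rewrite Rminus_diag, Rabs_R0; lra.
  - intros t St h1 h2. specialize (Hc t St h1 h2).
    rewrite (Rabs_left (g p)) in Hc by lra.
    destruct (Rabs_def2 _ _ Hc). lra.
Qed.

Lemma inV p : S p -> 0 < g p -> V p.
Proof.
  intros Sp Hg. destruct (gcont p Sp ltac:(lra)) as [d [Hd Hc]].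
  exists p, d. repeat split; auto.
  - rewrite Rminus_diag, Rabs_R0; lra.
  - rewrite Rminus_diag, Rabs_R0; lra.
  - intros t St h1 h2. specialize (Hc t St h1 h2).
    rewrite (Rabs_right (g p)) in Hc by lra.
    destruct (Rabs_def2 _ _ Hc). lra.
Qed.

Lemma g_zero_fixed s : S s -> g s = 0 -> proj_inv S (G s) s.
Proof.
  intros Ss Hg. split; [exact Ss|].
  destruct (HSsub s Ss) as [[Hx Hy] Hne].
  destruct (HGmap s Ss) as [_ Hab].
  unfold g in Hg. unfold proj_ray.
  destruct s as [x y]. simpl in *.
  destruct (G (x, y)) as [a b]. simpl in *.
  assert (Hxy : 0 < x + y).
  { destruct (Req_dec x 0); destruct (Req_dec y 0); subst; try lra.
    exfalso; apply Hne; reflexivity. }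
  assert (E1 : x = a * (x + y)) by nra.
  assert (E2 : y = b * (x + y)) by nra.
  f_equal.
  - rewrite E1 at 1. field. lra.
  - rewrite E2 at 1. field. lra.
Qed.

End Main.

Theorem lemma2p1 (S : pt -> Prop) (G : pt -> pt)
  (HSsub : forall p, S p -> quadrant p /\ p <> (0, 0))
  (HSconn : connected2 S)
  (HR : exists R0, 0 < R0 /\
          (exists y, 0 < y < R0 /\ S (0, y)) /\
          (exists x, 0 < x < R0 /\ S (x, 0)))
  (HGmap : forall s, S s -> Sigma (G s))
  (HGcont : continuous_on2 S G) :
  exists s, S s /\ proj_inv S (G s) s.
Proof.
  apply NNPP. intros Hno.
  assert (Hg : forall s, S s -> g G s <> 0).
  { intros s Ss H0. apply Hno. exists s. split; auto.
    apply g_zero_fixed; auto. }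
  destruct HR as [R0 [_ [[y [Hy Sy]] [x [Hx Sx]]]]].
  apply HSconn. exists (U S G), (V S G).
  split; [apply U_open; auto|].
  split; [apply V_open; auto|].
  split.
  { intros p Sp. destruct (Rlt_or_le (g G p) 0) as [h|h].
    - left. apply inU; auto.
    - right. apply inV; auto. specialize (Hg p Sp). lra. }
  split.
  { exists (0, y). split; auto. apply inU; auto.
    destruct (HGmap _ Sy) as [[ha hb] _]. specialize (Hg _ Sy).
    unfold g in *. simpl in *. nra. }
  split.
  { exists (x, 0). split; auto. apply inV; auto.
    destruct (HGmap _ Sx) as [[ha hb] _]. specialize (Hg _ Sx).
    unfold g in *. simpl in *. nra. }
  intros p Sp [s [d [_ [_ [h1 [h2 h3]]]]]] [s' [d' [_ [_ [h1' [h2' h3']]]]]].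
  specialize (h3 p Sp h1 h2). specialize (h3' p Sp h1' h2'). lra.
Qed.
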